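(* Let $C$ be a linear $[n,k]_q$-code (a $k$-dimensional subspace of $\mathbb F_q^n$, $1\le k\le n$) and let $r$ be an integer with $1\le r\le k$. Then $$d_r(C)\ge\frac{d(C)\,\Delta_r(C)+e(C)\,(q^r-1-\Delta_r(C))}{q^r-q^{r-1}}.$$
   Context: For $x\in\mathbb F_q^n$, $\|x\|=|\{i:x_i\ne0\}|$ is the Hamming norm; for $D\subseteq\mathbb F_q^n$, $\mathrm{supp}(D)=\{i: x_i\ne0\text{ for some }x\in D\}$ and $\|D\|=|\mathrm{supp}(D)|$. $d(C)=\min\{\|x\|: 0\ne x\in C\}$ and $d_r(C)=\min\{\|D\|: D\text{ a subspace of }C,\ \dim D=r\}$. For a subspace $D$ of $C$, $\Delta(D)=|\{x\in D:\|x\|=d(C)\}|$, and $\Delta_r(C)=\max\{\Delta(D): D\text{ a subspace of }C,\ \dim D=r\}$. Let $S_C=\{\|x\|: x\in C,\ \|x\|>d(C)\}$; $e(C)=\min S_C$ if $S_C\ne\emptyset$ and $e(C)=d(C)$ otherwise. *)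

(* Defs.v *)
From HB Require Import structures.
From mathcomp Require Import all_boot all_order all_algebra.
Set Implicit Arguments. Unset Strict Implicit. Unset Printing Implicit Defensive.
Import Order.TTheory GRing.Theory Num.Theory.
Local Open Scope ring_scope.

(* The ambient space F_q^n is 'rV[F]_n for a finite field F, q = #|F|.
   Subspaces of F_q^n are represented, following mathcomp's mxalgebra, as
   row spaces of square matrices A : 'M[F]_n; membership of x in the
   subspace is (x <= A)%MS, inclusion of subspaces is (A <= B)%MS and the
   dimension is \rank A.  Every subspace of F_q^n is the row space of such
   a matrix, and all notions below depend only on the row space. *)

Section Codes.
Variables (F : finFieldType) (n : nat).
Implicit Types (x : 'rV[F]_n) (C D : 'M[F]_n).

Definition hwt x : nat := #|[set i : 'I_n | x 0 i != 0]|.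

Definition supp D : {set 'I_n} :=
  [set i : 'I_n | [exists x : 'rV[F]_n, (x <= D)%MS && (x 0 i != 0)]].

Definition hnorm D : nat := #|supp D|.

(* d(C) = min { ||x|| : 0 <> x in C }  (default value n is irrelevant
   when C <> 0, since all weights are <= n) *)
Definition mindist C : nat :=
  \big[minn/n]_(x : 'rV[F]_n | (x <= C)%MS && (x != 0)) hwt x.

Definition gen_weight C (r : nat) : nat :=
  \big[minn/n]_(D : 'M[F]_n | (D <= C)%MS && (\rank D == r)) hnorm D.

Definition Delta C D : nat :=
  #|[set x : 'rV[F]_n | (x <= D)%MS && (hwt x == mindist C)]|.

Definition Delta_r C (r : nat) : nat :=
  \max_(D : 'M[F]_n | (D <= C)%MS && (\rank D == r)) Delta C D.

Definition next_weight C : nat :=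
  if [exists x : 'rV[F]_n, (x <= C)%MS && (mindist C < hwt x)%N]
  then \big[minn/n]_(x : 'rV[F]_n | (x <= C)%MS && (mindist C < hwt x)%N) hwt x
  else mindist C.

End Codes.

(* Main.v *)
Require Import Defs.
From HB Require Import structures.
From mathcomp Require Import all_boot all_order all_algebra.
Import Order.TTheory GRing.Theory Num.Theory.
Local Open Scope ring_scope.

HB.instance Definition _ := SemiGroup.isComLaw.Build nat minn minnA minnC.

Lemma bigmin_le (I : finType) (P : pred I) (G : I -> nat) m j :
  P j -> (\big[minn/m]_(i | P i) G i <= G j)%N.
Proof. by move=> Pj; rewrite (bigD1 j Pj) geq_minl. Qed.

Lemma bigmin_ge (I : finType) (P : pred I) (G : I -> nat) m B :
  (B <= m)%N -> (forall i, P i -> B <= G i)%N -> (B <= \big[minn/m]_(i | P i) G i)%N.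
Proof.
move=> Bm HG; apply: (big_ind (fun x => B <= x)%N) => //.
by move=> x y Hx Hy; rewrite leq_min Hx Hy.
Qed.

Lemma bigmin_attained (I : finType) (P : pred I) (G : I -> nat) m j1 :
  P j1 -> (forall i, P i -> G i <= m)%N ->
  exists j, P j /\ \big[minn/m]_(i | P i) G i = G j.
Proof.
move=> Pj1 Hm; case: (arg_minnP G Pj1) => j Pj Hj.
exists j; split => //; apply/eqP; rewrite eqn_leq bigmin_le //.
by apply: bigmin_ge => //; apply: Hm.
Qed.

Lemma card_sum (T : finType) (P : {pred T}) : #|P| = (\sum_(v : T) nat_of_bool (v \in P))%N.
Proof. rewrite -sum1_card big_mkcond; apply: eq_bigr => v _; by case: ifP. Qed.

Section S.
Variable F : finFieldType.

Lemma card_rowspace m p (A : 'M[F]_(p, m)) :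
  #|[set v : 'rV[F]_m | (v <= A)%MS]| = (#|F| ^ \rank A)%N.
Proof.
have -> : [set v : 'rV[F]_m | (v <= A)%MS] =
   [set w *m row_base A | w in [set: 'rV[F]_(\rank A)]].
  apply/setP => v; rewrite inE -(eq_row_base A).
  apply/submxP/imsetP => [[u ->]|[u _ ->]]; by exists u.
rewrite card_imset; last exact: row_free_inj (row_base_free A).
by rewrite cardsT card_mx mul1n.
Qed.

Lemma hwt0 n : hwt (0 : 'rV[F]_n) = 0%N.
Proof. by apply/eqP; rewrite /hwt cards_eq0; apply/eqP/setP => i; rewrite !inE mxE eqxx. Qed.

Lemma hwt_gt0 n (x : 'rV[F]_n) : x != 0 -> (0 < hwt x)%N.
Proof.
move=> nx; rewrite /hwt card_gt0; apply: contraNneq nx => H.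
apply/eqP/rowP => i; rewrite mxE; apply/eqP; apply: contraT => Hi.
by move: (in_set0 i); rewrite -H inE Hi.
Qed.

Lemma hwt_le n (x : 'rV[F]_n) : (hwt x <= n)%N.
Proof. by apply: leq_trans (max_card _) _; rewrite card_ord. Qed.

Lemma hnorm_le n (D : 'M[F]_n) : (hnorm D <= n)%N.
Proof. by apply: leq_trans (max_card _) _; rewrite card_ord. Qed.


Lemma coord_mul m n (B : 'M[F]_(m,n)) (v : 'rV[F]_m) i :
  ((v *m B) 0 i == 0) = (v *m col i B == 0).
Proof.
have E : (v *m B) 0 i = (v *m col i B) 0 0.
  by rewrite !mxE; apply: eq_bigr => j _; rewrite mxE.
rewrite E; apply/eqP/eqP => [H|->]; last by rewrite mxE.
by apply/matrixP => a b; rewrite !ord1 H mxE.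
Qed.

Lemma card_nz_coord m n (B : 'M[F]_(m,n)) i : col i B != 0 ->
  #|[set v : 'rV[F]_m | (v *m B) 0 i != 0]| = (#|F|^m - #|F|^(m-1))%N.
Proof.
move=> nc.
have rc : \rank (col i B) = 1%N.
  apply/eqP; rewrite eqn_leq rank_leq_col lt0n mxrank_eq0 nc //.
have E : ~: [set v : 'rV[F]_m | (v *m B) 0 i != 0] =
         [set v : 'rV[F]_m | (v <= kermx (col i B))%MS].
  by apply/setP => v; rewrite !inE negbK sub_kermx coord_mul.
have := cardsC [set v : 'rV[F]_m | (v *m B) 0 i != 0].
rewrite E card_rowspace mxrank_ker rc cardT -cardE card_mx mul1n => <-.
by rewrite addnK.
Qed.

Lemma hwt_sum n (x : 'rV[F]_n) : hwt x = (\sum_i nat_of_bool (x 0%R i != 0%R))%N.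
Proof. by rewrite /hwt card_sum; apply: eq_bigr => i _; rewrite inE. Qed.

Lemma sum_weights n (D : 'M[F]_n) :
  (\sum_(v : 'rV[F]_(\rank D)) hwt (v *m row_base D))%N =
  (hnorm D * (#|F| ^ \rank D - #|F| ^ (\rank D - 1)))%N.
Proof.
set B := row_base D; set M := (#|F| ^ \rank D - #|F| ^ (\rank D - 1))%N.
under eq_bigr => v _ do rewrite hwt_sum.
rewrite exchange_big /=.
transitivity (\sum_(i : 'I_n) (if i \in supp D then M else 0))%N.
  apply: eq_bigr => i _.
  rewrite (_ : (\sum__ _)%N = #|[set v : 'rV[F]_(\rank D) | (v *m B) 0 i != 0]|); last first.
    by rewrite card_sum; apply: eq_bigr => v _; rewrite inE.
  rewrite inE; case: existsP => [[x /andP[xD xi]]|Hn].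
    rewrite card_nz_coord //.
    apply: contra xi => /eqP c0.
    move: xD; rewrite -(eq_row_base D) => /submxP [u ->].
    by rewrite coord_mul c0 mulmx0.
  apply/eqP; rewrite -leqn0 leqNgt; apply/negP => /card_gt0P [v].
  rewrite inE /= => vi; apply: Hn; exists (v *m B).
  by rewrite vi andbT; apply: submx_trans (submxMl _ _) _; rewrite eq_row_base.
rewrite -big_mkcond sum_nat_const /= /hnorm; by [].
Qed.
End S.

From mathcomp Require Import lra.

Theorem theorem4p2 (F : finFieldType) (n k : nat) (C : 'M[F]_n) (r : nat) :
  (1 <= k <= n)%N -> \rank C = k -> (1 <= r <= k)%N ->
  let q : rat := (#|F|)%:R in
  ((gen_weight C r)%:R : rat) >=
    ((mindist C)%:R * (Delta_r C r)%:R
       + (next_weight C)%:R * (q ^+ r - 1 - (Delta_r C r)%:R))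
    / (q ^+ r - q ^+ r.-1).
Proof.
move=> /andP[k1 kn] rkC /andP[r1 rk]; rewrite /=; set q := (#|F|%:R : rat).
set d := mindist C; set e := next_weight C; set Dr := Delta_r C r.
have [D1 [D1C rD1]] : exists D1 : 'M[F]_n, (D1 <= C)%MS /\ \rank D1 = r.
  exists ((pid_mx r : 'M[F]_(n, \rank C)) *m row_base C); split.
    by apply: submx_trans (submxMl _ _) _; rewrite eq_row_base.
  rewrite mxrankMfree ?row_base_free // rank_pid_mx //.
    exact: leq_trans rk kn.
  by rewrite rkC.
have [D0 [/andP[D0C /eqP rD0] gD0]] :=
  @bigmin_attained _ (fun D : 'M[F]_n => (D <= C)%MS && (\rank D == r))
     (@hnorm F n) n D1 (introT andP (conj D1C (introT eqP rD1)))
     (fun D _ => @hnorm_le F n D).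
have dle : forall x : 'rV[F]_n, (x <= C)%MS -> x != 0 -> (d <= hwt x)%N.
  move=> x xC nx; rewrite /d /mindist; apply: bigmin_le; by rewrite xC nx.
have d1 : (0 < d)%N.
  rewrite /d /mindist; apply: bigmin_ge; first exact: leq_trans k1 kn.
  by move=> x /andP[_ nx]; apply: hwt_gt0.
have ele : forall x : 'rV[F]_n, (x <= C)%MS -> (d < hwt x)%N -> (e <= hwt x)%N.
  move=> x xC dx; rewrite /e /next_weight; case: ifP => [_|/negbT /existsPn H].
    by apply: bigmin_le; rewrite xC.
  by move: (H x); rewrite xC dx.
have de : (d <= e)%N.
  rewrite /e /next_weight; case: ifP => [/existsP [x /andP [xC dx]]|_ //].
  apply: bigmin_ge; first exact: ltnW (leq_trans dx (@hwt_le F n x)).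
  by move=> y /andP[_ /ltnW].
set B := row_base D0.
have fC : forall v : 'rV[F]_(\rank D0), (v *m B <= C)%MS.
  move=> v; apply: submx_trans D0C; apply: submx_trans (submxMl _ _) _.
  by rewrite eq_row_base.
have finj : injective (fun v : 'rV[F]_(\rank D0) => v *m B).
  exact: row_free_inj (row_base_free D0).
set A := [set v : 'rV[F]_(\rank D0) | hwt (v *m B) == d].
set Bs := [set v : 'rV[F]_(\rank D0) | (v != 0) && (hwt (v *m B) != d)].
have DA : Delta C D0 = #|A|.
  rewrite /Delta -(card_imset A finj); apply: eq_card => x.
  rewrite inE; apply/andP/imsetP => [[xD hx]|[v vA ->]].
    move: xD; rewrite -(eq_row_base D0) => /submxP [u xu].
    by exists u => //; rewrite inE -xu.
  split; last by rewrite inE in vA.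
  by apply: submx_trans (submxMl _ _) _; rewrite eq_row_base.
have DD : (Delta C D0 <= Dr)%N.
  by rewrite /Dr /Delta_r; apply: (leq_bigmax_cond (F := Delta C)); rewrite D0C rD0 eqxx.
have S1 := @sum_weights F n D0.
have S2 : (d * #|A| + e * #|Bs| <=
     \sum_(v : 'rV[F]_(\rank D0)) hwt (v *m row_base D0))%N.
  rewrite !card_sum !big_distrr -big_split; apply: leq_sum => v _; rewrite !inE.
  have [->|nv] := eqVneq v 0.
    by rewrite mul0mx hwt0 eq_sym (negbTE (lt0n_neq0 d1)) /= !muln0.
  have hd := dle _ (fC v) (contra_neq (fun h => finj _ _ (etrans h (esym (mul0mx _ _)))) nv).
  case: eqP => [->|hn] /=; first by rewrite muln1 muln0 addn0.
  have : (d < hwt (v *m B))%N by rewrite ltn_neqAle hd andbT; apply/eqP => h; apply: hn.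
  by move=> /(ele _ (fC v)); rewrite muln0 muln1.
have S3 : (#|A| + #|Bs|)%N = (#|F| ^ \rank D0).-1.
  have -> : (#|F| ^ \rank D0)%N = #|{: 'rV[F]_(\rank D0)}| by rewrite card_mx mul1n.
  rewrite -(cardC1 (0 : 'rV[F]_(\rank D0))).
  rewrite !card_sum -big_split; apply: eq_bigr => v _; rewrite !inE.
  have [->|nv] := eqVneq v 0.
    by rewrite mul0mx hwt0 eq_sym (negbTE (lt0n_neq0 d1)).
  by case: eqP.
rewrite S1 in S2; rewrite /gen_weight gD0.
have q1 : (1 < #|F|)%N := card_finNzRing_gt1 F.
have Mlt : (#|F| ^ (\rank D0 - 1) < #|F| ^ \rank D0)%N.
  by rewrite ltn_exp2l // rD0 subn1 prednK.
have Q1 : (0 < #|F| ^ \rank D0)%N by apply: leq_ltn_trans Mlt.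
have E1 : q ^+ r = (#|F| ^ \rank D0)%:R by rewrite natrX rD0.
have E2 : q ^+ r.-1 = (#|F| ^ (\rank D0 - 1))%:R by rewrite natrX rD0 subn1.
rewrite E1 E2 ler_pdivrMr; last by rewrite subr_gt0 ltr_nat.
move: S2; rewrite -(ler_nat rat) !natrD !natrM natrB ?(ltnW Mlt) // => S2.
have S3' : (#|Bs|%:R : rat) = (#|F| ^ \rank D0)%:R - 1 - #|A|%:R.
  have H : (#|A|%:R + #|Bs|%:R : rat) = (#|F| ^ \rank D0)%:R - 1.
    by rewrite -natrD S3 -subn1 natrB.
  lra.
rewrite S3' in S2.
have hA : (#|A|%:R : rat) <= Dr%:R by rewrite ler_nat -DA.
have hde : (d%:R : rat) <= e%:R by rewrite ler_nat.
have hp : (0 : rat) <= (e%:R - d%:R) * (Dr%:R - #|A|%:R).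
  by apply: mulr_ge0; rewrite subr_ge0.
have hM : (0 : rat) < (#|F| ^ \rank D0)%:R - (#|F| ^ (\rank D0 - 1))%:R.
  by rewrite subr_gt0 ltr_nat.
nra.
Qed.
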